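(* Let $(\mathcal{A},\varphi)$ be a tracial noncommutative probability space with universal enveloping traffic space $(\mathcal{G}(\mathcal{A}),\psi)$. For any graph monomial $t\in\mathcal{G}(\mathcal{A})$ there exists a partition $\pi$ of its vertex set such that the quotient $t^\pi$ is a quasi-cactus and $t^\pi\equiv t\pmod\psi$.
   Context: $(\mathcal{A},\varphi)$: unital complex algebra with unital tracial linear functional; free cumulants $\kappa_n$ determined by $\varphi(a_1\cdots a_n)=\sum_{\pi\in NC(n)}\prod_{B\in\pi}\kappa_{|B|}[(a_i)_{i\in B}]$. A graph monomial in $\mathcal{A}$ is a finite connected directed multigraph (loops, parallel edges allowed) with distinguished, not necessarily distinct, vertices $v_{\mathrm{in}},v_{\mathrm{out}}$ and edge labels in $\mathcal{A}$, up to isomorphism; $t^\pi$ identifies vertices in each block of $\pi$ (input/output become their images). $\iota(a)$: two vertices, one edge from $v_{\mathrm{in}}$ to $v_{\mathrm{out}}$ labelled $a$. Substitution $Z_g(t_1,\dots,t_K)$ for a connected bi-rooted multidigraph $g$ with ordered edges $e_1,\dots,e_K$ replaces each $e_i$ by a copy of $t_i$, identifying $\mathrm{src}(e_i)$ with the input and $\mathrm{tgt}(e_i)$ with the output of $t_i$; the product $t_1t_2$ identifies the input of $t_1$ with the output of $t_2$. $\mathcal{G}(\mathcal{A})$ is the span of graph monomials modulo the span of $Z_g(\iota(a_1),\dots,\iota(a_K))-Z_g(P(\iota(b_1),\dots,\iota(b_n)),\iota(a_2),\dots)$ (any edge position) for $a_1=P(b_1,\dots,b_n)$, $P$ a noncommutative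 polynomial. A test graph is a finite connected directed multigraph with labels in $\mathcal{A}$. Cactus: connected multigraph with each edge in exactly one simple cycle (loops, pairs of parallel edges count); pads = these cycles; oriented cactus: every pad directed. $\tau^0_\varphi[T]=\prod_{C\in\mathrm{Pads}(T)}\kappa_{n_C}[\gamma(e_1),\dots,\gamma(e_{n_C})]$ for oriented cacti (edges listed with $\mathrm{src}(e_i)=\mathrm{tgt}(e_{i+1})$, indices mod $n_C$), else $0$; $\tau_\varphi[T]=\sum_\pi\tau^0_\varphi[T^\pi]$ over partitions of the vertex set. $\psi(t)=\tau_\varphi[\tilde\Delta(t)]$ where $\tilde\Delta(t)$ identifies input and output and forgets roots. $s\equiv t\pmod\psi$ means $\psi((s-t)u)=0$ for all $u$. A quasi-cactus is a multigraph in which $\lambda(v,w)\in\{1,2\}$ for all distinct vertices $v,w$, where $\lambda(v,w)$ is the minimal number of edges whose deletion disconnects $v$ and $w$ (equivalently every edge belongs to at most one simple cycle). *)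

(* Defs.v *)
From HB Require Import structures.
From mathcomp Require Import all_boot all_order all_algebra.
From mathcomp Require Import complex Rstruct.
Set Implicit Arguments. Unset Strict Implicit. Unset Printing Implicit Defensive.
Import Order.TTheory GRing.Theory Num.Theory.
Local Open Scope ring_scope.

Definition complexC : numClosedFieldType := (Rdefinitions.R)[i].

Section Traffic.
Variables (K : fieldType) (A : algType K) (phi : A -> K).

Definition noncrossing n (P : {set {set 'I_n}}) : bool :=
  [forall a : 'I_n, forall b : 'I_n, forall c : 'I_n, forall d : 'I_n,
     [&& (a < b)%N, (b < c)%N, (c < d)%N, pblock P a == pblock P c
       & pblock P b == pblock P d] ==> (pblock P a == pblock P b)].

Definition subword (s : seq A) (B : {set 'I_(size s)}) : seq A :=
  [seq nth 0 s (val i) | i <- enum B].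

(* kappa_n defined recursively by the moment-cumulant formula
   phi(a_1...a_n) = sum_{pi in NC(n)} prod_{B in pi} kappa_|B|[(a_i)_{i in B}] ;
   the fuel argument is any bound >= size s. *)
Fixpoint kappa_fuel (fuel : nat) (s : seq A) : K :=
  match fuel with
  | 0 => 0
  | k.+1 =>
      phi (\prod_(x <- s) x)
      - \sum_(P : {set {set 'I_(size s)}} |
                [&& partition P [set: 'I_(size s)], noncrossing P
                  & P != [set [set: 'I_(size s)]]])
          \prod_(B in P) kappa_fuel k (subword B)
  end.

Definition kappa (s : seq A) : K := kappa_fuel (size s) s.

(* A (directed multi)graph with vertex set {0,..,tg_n-1}; each edge is a
   triple (source, target, label); edges are indexed by their position. *)
Record testgraph := TG { tg_n : nat; tg_e : seq (nat * nat * A) }.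

Definition tg_wf (T : testgraph) : bool :=
  all (fun e => (e.1.1 < tg_n T)%N && (e.1.2 < tg_n T)%N) (tg_e T).

Definition edge_t (T : testgraph) := 'I_(size (tg_e T)).
Definition esrc T (i : edge_t T) : nat := (nth (0%N, 0%N, 0) (tg_e T) i).1.1.
Definition etgt T (i : edge_t T) : nat := (nth (0%N, 0%N, 0) (tg_e T) i).1.2.
Definition elab T (i : edge_t T) : A := (nth (0%N, 0%N, 0) (tg_e T) i).2.

Definition vert_t (T : testgraph) := 'I_(tg_n T).

Definition adjS T (S : {set edge_t T}) : rel (vert_t T) :=
  fun x y => [exists i in S, ((esrc i == x) && (etgt i == y))
                          || ((esrc i == y) && (etgt i == x))].

Definition connected (T : testgraph) : bool :=
  [forall x : vert_t T, forall y : vert_t T, connect (adjS [set: edge_t T]) x y].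

Definition blk n (P : {set {set 'I_n}}) (x : nat) : nat :=
  if insub x is Some v then index (pblock P v) (enum P) else 0%N.

Definition quot (T : testgraph) (P : {set {set vert_t T}}) : testgraph :=
  TG #|P| [seq (blk P e.1.1, blk P e.1.2, e.2) | e <- tg_e T].

Definition glue_part (T : testgraph) (a b : nat) : {set {set vert_t T}} :=
  preim_partition (fun v : vert_t T => if val v == b then a else val v)
                  [set: vert_t T].
Definition glue (T : testgraph) (a b : nat) : testgraph := quot (glue_part T a b).

Definition indeg T (S : {set edge_t T}) (v : vert_t T) : nat :=
  #|[set i in S | etgt i == v]|.
Definition outdeg T (S : {set edge_t T}) (v : vert_t T) : nat :=
  #|[set i in S | esrc i == v]|.
Definition touched T (S : {set edge_t T}) (v : vert_t T) : bool :=
  [exists i in S, (esrc i == v) || (etgt i == v)].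

(* simple cycle = nonempty edge set forming a connected 2-regular
   subgraph (a loop gives degree 2; two parallel edges form a cycle) *)
Definition simple_cycle T (S : {set edge_t T}) : bool :=
  [&& S != set0,
      [forall v : vert_t T, touched S v ==> (indeg S v + outdeg S v == 2)%N]
    & [forall v : vert_t T, forall w : vert_t T,
         (touched S v && touched S w) ==> connect (adjS S) v w]].

Definition is_cactus (T : testgraph) : bool :=
  tg_wf T && connected T &&
  [forall i : edge_t T, #|[set S : {set edge_t T} | simple_cycle S & i \in S]| == 1%N].

Definition pads (T : testgraph) : {set {set edge_t T}} :=
  [set S : {set edge_t T} | simple_cycle S].

Definition oriented_cactus (T : testgraph) : bool :=
  is_cactus T &&
  [forall S in pads T, forall v : vert_t T,
     touched S v ==> ((indeg S v == 1%N) && (outdeg S v == 1%N))].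

(* edges of a directed pad listed e_1,...,e_k with src(e_i) = tgt(e_{i+1}) *)
Definition pad_next T (S : {set edge_t T}) (e : edge_t T) : edge_t T :=
  odflt e [pick f in S | etgt f == esrc e].
Definition pad_labels T (S : {set edge_t T}) : seq A :=
  if enum S is e0 :: _ then [seq elab e | e <- traject (pad_next S) e0 #|S|]
  else [::].

Definition tau0 (T : testgraph) : K :=
  if oriented_cactus T then \prod_(S in pads T) kappa (pad_labels S) else 0.

Definition tau (T : testgraph) : K :=
  \sum_(P : {set {set vert_t T}} | partition P [set: vert_t T]) tau0 (quot P).

Record gmono := GM { gm_g : testgraph; gm_in : nat; gm_out : nat }.

Definition gm_wf (t : gmono) : bool :=
  [&& tg_wf (gm_g t), (gm_in t < tg_n (gm_g t))%N, (gm_out t < tg_n (gm_g t))%N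
    & connected (gm_g t)].

Definition gm_quot (t : gmono) (P : {set {set vert_t (gm_g t)}}) : gmono :=
  GM (quot P) (blk P (gm_in t)) (blk P (gm_out t)).

(* product t u : the input of t is identified with the output of u;
   the input of t u is the input of u, its output is the output of t *)
Definition gm_mul (t u : gmono) : gmono :=
  let n1 := tg_n (gm_g t) in
  let T := TG (n1 + tg_n (gm_g u))
              (tg_e (gm_g t) ++
               [seq (n1 + e.1.1, n1 + e.1.2, e.2)%N | e <- tg_e (gm_g u)]) in
  let P := glue_part T (gm_in t) (n1 + gm_out u)%N in
  GM (quot P) (blk P (n1 + gm_in u)%N) (blk P (gm_out t)).

Definition delta (t : gmono) : testgraph := glue (gm_g t) (gm_in t) (gm_out t).

Definition psi (t : gmono) : K := tau (delta t).


(* s = t (mod psi), tested against all graph monomials u (which span G(A)) *)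
Definition eq_mod_psi (s t : gmono) : Prop :=
  forall u : gmono, gm_wf u -> psi (gm_mul s u) = psi (gm_mul t u).

End Traffic.
Arguments gm_quot {K A} t P.

Section QC.
Variables (K : fieldType) (A : algType K).

Definition edge_conn (T : testgraph A) (v w : vert_t T) : nat :=
  \big[minn/(size (tg_e T)).+1]_(S : {set edge_t T} |
        ~~ connect (adjS (~: S)) v w) #|S|.

Definition quasi_cactus (T : testgraph A) : bool :=
  [forall v : vert_t T, forall w : vert_t T,
     (v != w) ==> (edge_conn v w \in [:: 1%N; 2%N])].
End QC.

(* Main.v *)
Require Import Defs.
From HB Require Import structures.
From mathcomp Require Import all_boot all_order all_algebra.
From Stdlib Require Import FunctionalExtensionality.
Set Implicit Arguments. Unset Strict Implicit. Unset Printing Implicit Defensive.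

Section Part.
Variable n : nat.
Implicit Types P Q : {set {set 'I_n}}.

Lemma part_cover P : partition P setT -> forall x, x \in cover P.
Proof. by move=> /and3P[/eqP -> _ _] x; rewrite inE. Qed.

Lemma pblock_inP P x : partition P setT -> pblock P x \in P.
Proof. by move=> hP; apply: pblock_mem; apply: part_cover. Qed.

Lemma pblock_eqE P x y : partition P setT ->
  (pblock P x == pblock P y) = (y \in pblock P x).
Proof.
move=> hP; apply: eq_pblock; first by case/and3P: hP.
exact: part_cover.
Qed.

Lemma blk_ord P (v : 'I_n) : blk P v = index (pblock P v) (enum P).
Proof. by rewrite /blk valK. Qed.

Lemma blk_lt P x : partition P setT -> x < n -> blk P x < #|P|.
Proof.
move=> hP xn; rewrite -[x]/(val (Ordinal xn)) blk_ord cardE index_mem mem_enum.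
exact: pblock_inP.
Qed.

Lemma blk_eq P (v w : 'I_n) : partition P setT ->
  (blk P v == blk P w) = (pblock P v == pblock P w).
Proof.
move=> hP; rewrite !blk_ord; apply/eqP/eqP => [|-> //].
move/(congr1 (nth set0 (enum P))); rewrite !nth_index // mem_enum; exact: pblock_inP.
Qed.

Lemma blk_onto P j : partition P setT -> j < #|P| -> exists v : 'I_n, blk P v = j.
Proof.
move=> hP jP; set B := nth set0 (enum P) j.
have BP : B \in P by rewrite -mem_enum mem_nth // -cardE.
have : B != set0 by apply: (partition_neq0 hP).
case/set0Pn => v vB; exists v; rewrite blk_ord.
have -> : pblock P v = B by apply: def_pblock => //; case/and3P: hP.
by rewrite index_uniq ?enum_uniq // -cardE.
Qed.

Lemma part_eq P Q : partition P setT -> partition Q setT ->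
  (forall x y, (pblock P x == pblock P y) = (pblock Q x == pblock Q y)) -> P = Q.
Proof.
move=> hP hQ H.
rewrite -(preim_partition_pblock hP) -(preim_partition_pblock hQ).
rewrite /preim_partition /equivalence_partition; apply: eq_imset => x.
by apply/setP => y; rewrite !inE H.
Qed.

Lemma pblock_preim (T' : eqType) (f : 'I_n -> T') x y :
  (pblock (preim_partition f setT) x == pblock (preim_partition f setT) y) = (f x == f y).
Proof.
have hP := preim_partitionP f setT.
rewrite pblock_eqE //.
rewrite /preim_partition pblock_equivalence_partition ?inE //.
by split=> // /eqP ->.
Qed.

End Part.

Section Gen.
Variables (K : fieldType) (A : algType K) (phi : A -> K).

Section Defs.
Variables (n m : nat) (s t : 'I_m -> nat) (l : 'I_m -> A).
Definition gadj (S : {set 'I_m}) : rel 'I_n := fun x y =>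
  [exists i in S, ((s i == x) && (t i == y)) || ((s i == y) && (t i == x))].
Definition gwf := [forall i, (s i < n) && (t i < n)].
Definition gconnected := [forall x : 'I_n, forall y : 'I_n, connect (gadj [set: 'I_m]) x y].
Definition gindeg (S : {set 'I_m}) (v : 'I_n) : nat := #|[set i in S | t i == v]|.
Definition goutdeg (S : {set 'I_m}) (v : 'I_n) : nat := #|[set i in S | s i == v]|.
Definition gtouched (S : {set 'I_m}) (v : 'I_n) : bool :=
  [exists i in S, (s i == v) || (t i == v)].
Definition gsc (S : {set 'I_m}) : bool :=
  [&& S != set0,
      [forall v : 'I_n, gtouched S v ==> (gindeg S v + goutdeg S v == 2)%N]
    & [forall v : 'I_n, forall w : 'I_n,
         (gtouched S v && gtouched S w) ==> connect (gadj S) v w]].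
Definition gcactus := gwf && gconnected &&
  [forall i : 'I_m, #|[set S : {set 'I_m} | gsc S & i \in S]| == 1%N].
Definition gpads := [set S : {set 'I_m} | gsc S].
Definition gorient := gcactus &&
  [forall S in gpads, forall v : 'I_n,
     gtouched S v ==> ((gindeg S v == 1%N) && (goutdeg S v == 1%N))].
Definition gnext (S : {set 'I_m}) (e : 'I_m) : 'I_m :=
  odflt e [pick f in S | t f == s e].
Definition glabels (S : {set 'I_m}) : seq A :=
  if enum S is e0 :: _ then [seq l e | e <- traject (gnext S) e0 #|S|]
  else [::].
Definition gtau0 : K :=
  if gorient then (\prod_(S in gpads) kappa phi (glabels S))%R else 0%R.
End Defs.

Lemma wfE (T : testgraph A) : tg_wf T = gwf (tg_n T) (@esrc _ _ T) (@etgt _ _ T).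
Proof.
rewrite /tg_wf /gwf; apply/(all_nthP (0%N,0%N,0%R))/forallP => [H i|H j jlt].
  exact: H.
exact: (H (Ordinal jlt)).
Qed.

Lemma tau0_gen (T : testgraph A) :
  tau0 phi T = gtau0 (tg_n T) (@esrc _ _ T) (@etgt _ _ T) (@elab _ _ T).
Proof. by rewrite /tau0 /oriented_cactus /is_cactus wfE. Qed.

Lemma gtau0_cast n m1 m2 (e : m1 = m2) s t l s' t' l' :
  (forall i, s' (cast_ord e i) = s i) -> (forall i, t' (cast_ord e i) = t i) ->
  (forall i, l' (cast_ord e i) = l i) ->
  gtau0 n s t l = gtau0 n s' t' l'.
Proof.
case: m2 / e in s' t' l' * => Hs Ht Hl.
have -> : s' = s by apply: functional_extensionality => i; rewrite -Hs cast_ord_id.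
have -> : t' = t by apply: functional_extensionality => i; rewrite -Ht cast_ord_id.
have -> : l' = l by apply: functional_extensionality => i; rewrite -Hl cast_ord_id.
by [].
Qed.


Lemma connect_bij (T1 T2 : finType) (f : T1 -> T2) (g : T2 -> T1)
  (e1 : rel T1) (e2 : rel T2) : cancel f g -> cancel g f ->
  (forall x y, e2 (f x) (f y) = e1 x y) ->
  forall x y, connect e2 (f x) (f y) = connect e1 x y.
Proof.
move=> fK gK H x y; apply/connectP/connectP => [[p hp hl]|[p hp hl]].
  exists (map g p).
    rewrite -[x in path _ x _](fK x) path_map; move: hp; apply: sub_path => a b /=.
    by rewrite -H !gK.
  by rewrite -{1}(fK x) last_map -hl fK.
exists (map f p); first by rewrite path_map; move: hp; apply: sub_path => a b /=; rewrite H.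
by rewrite last_map hl.
Qed.

Section Iso.
Variables (n n' m : nat) (s t s' t' : 'I_m -> nat) (l : 'I_m -> A).
Variables (sg sg' : nat -> nat).
Hypotheses (sg_lt : forall v, v < n -> sg v < n')
  (sg'_lt : forall w, w < n' -> sg' w < n)
  (sgK : forall v, v < n -> sg' (sg v) = v)
  (sg'K : forall w, w < n' -> sg (sg' w) = w)
  (Hs : forall i v, v < n -> (s' i == sg v) = (s i == v))
  (Ht : forall i v, v < n -> (t' i == sg v) = (t i == v)).

Let so (v : 'I_n) : 'I_n' := Ordinal (sg_lt (ltn_ord v)).
Let so' (w : 'I_n') : 'I_n := Ordinal (sg'_lt (ltn_ord w)).
Let soK : cancel so so'.
Proof. by move=> v; apply: val_inj; rewrite /= sgK. Qed.
Let so'K : cancel so' so.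
Proof. by move=> v; apply: val_inj; rewrite /= sg'K. Qed.

Let forall_so (P : 'I_n' -> bool) : [forall w, P w] = [forall v, P (so v)].
Proof.
apply/forallP/forallP => H w //; by rewrite -(so'K w).
Qed.

Let Hso i (v : 'I_n) : (s' i == so v) = (s i == v).
Proof. exact: Hs. Qed.
Let Hto i (v : 'I_n) : (t' i == so v) = (t i == v).
Proof. exact: Ht. Qed.

Lemma gadj_so S x y : gadj s' t' S (so x) (so y) = gadj s t S x y.
Proof. by apply: eq_existsb => i; rewrite !Hso !Hto. Qed.

Lemma gwf_so : gwf n' s' t' = gwf n s t.
Proof.
have E (u u' : 'I_m -> nat) : (forall i v, v < n -> (u' i == sg v) = (u i == v)) ->
    forall i, (u' i < n') = (u i < n).
  move=> Hu i; apply/idP/idP => lt.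
    have := Hu i _ (sg'_lt lt); rewrite sg'K // eqxx => /esym/eqP ->.
    exact: sg'_lt.
  by have := Hu i _ lt; rewrite eqxx => /eqP ->; apply: sg_lt.
by apply: eq_forallb => i; rewrite (E _ _ Hs) (E _ _ Ht).
Qed.

Lemma gtouched_so S v : gtouched s' t' S (so v) = gtouched s t S v.
Proof. by apply: eq_existsb => i; rewrite Hso Hto. Qed.
Lemma gindeg_so S v : gindeg t' S (so v) = gindeg t S v.
Proof. by apply: eq_card => i; rewrite !inE Hto. Qed.
Lemma goutdeg_so S v : goutdeg s' S (so v) = goutdeg s S v.
Proof. by apply: eq_card => i; rewrite !inE Hso. Qed.

Lemma gsc_so S : gsc n' s' t' S = gsc n s t S.
Proof.
rewrite /gsc !forall_so; congr [&& _, _ & _].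
  by apply: eq_forallb => v; rewrite gtouched_so gindeg_so goutdeg_so.
apply: eq_forallb => v; rewrite forall_so; apply: eq_forallb => w.
by rewrite !gtouched_so (connect_bij soK so'K (gadj_so S)).
Qed.

Lemma gconnected_so : gconnected n' s' t' = gconnected n s t.
Proof.
rewrite /gconnected forall_so; apply: eq_forallb => v; rewrite forall_so.
by apply: eq_forallb => w; rewrite (connect_bij soK so'K (gadj_so _)).
Qed.

Lemma gcactus_so : gcactus n' s' t' = gcactus n s t.
Proof.
rewrite /gcactus gwf_so gconnected_so.
have -> // : gsc n' s' t' = gsc n s t.
by apply: functional_extensionality => S; apply: gsc_so.
Qed.

Lemma gpads_so : gpads n' s' t' = gpads n s t.
Proof. by apply/setP => S; rewrite !inE gsc_so. Qed.

Lemma gorient_so : gorient n' s' t' = gorient n s t.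
Proof.
rewrite /gorient gcactus_so gpads_so; congr (_ && _).
apply: eq_forallb => S; congr (_ ==> _); rewrite forall_so; apply: eq_forallb => v.
by rewrite gtouched_so gindeg_so goutdeg_so.
Qed.

Lemma gnext_so S : gwf n s t -> gnext s' t' S =1 gnext s t S.
Proof.
move=> /forallP wf e; rewrite /gnext; congr odflt; apply: eq_pick => f /=.
have /andP[lt _] := wf e.
have := Hs e lt; rewrite eqxx => /eqP ->.
by rewrite Ht.
Qed.

Lemma gtau0_so : gtau0 n' s' t' l = gtau0 n s t l.
Proof.
rewrite /gtau0 gorient_so gpads_so; case: ifP => // ho.
have wf : gwf n s t by move: ho => /andP[/andP[/andP[]]].
apply: eq_bigr => S _; congr (kappa phi _); rewrite /glabels.
case: (enum S) => // e0 _.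
have -> // : gnext s' t' S = gnext s t S.
by apply: functional_extensionality => e; apply: gnext_so.
Qed.

End Iso.

End Gen.

Section Emap.
Variables (K : fieldType) (A : algType K) (phi : A -> K).

Definition emap (f : nat -> nat) (T1 T2 : testgraph A) : Prop :=
  [/\ tg_e T2 = [seq (f e.1.1, f e.1.2, e.2) | e <- tg_e T1],
      forall x, x < tg_n T1 -> f x < tg_n T2 &
      forall y, y < tg_n T2 -> exists2 x, x < tg_n T1 & f x = y].

Lemma emap_comp f g T1 T2 T3 : emap f T1 T2 -> emap g T2 T3 -> emap (g \o f) T1 T3.
Proof.
case=> e1 l1 s1 [e2 l2 s2]; split.
- by rewrite e2 e1 -map_comp.
- by move=> x /l1 /l2.
move=> y /s2 [z /s1 [w xl <-] <-]; by exists w.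
Qed.

Lemma emap_quot (T : testgraph A) (P : {set {set vert_t T}}) :
  partition P setT -> emap (blk P) T (quot P).
Proof.
move=> hP; split => //.
- by move=> x; apply: blk_lt.
move=> y /(blk_onto hP) [v <-]; by exists v.
Qed.

Definition secf n1 (f : nat -> nat) y :=
  if [pick x : 'I_n1 | f x == y] is Some x then val x else 0%N.

Lemma secfP n1 n2 f y : (forall y, y < n2 -> exists2 x, x < n1 & f x = y) ->
  y < n2 -> secf n1 f y < n1 /\ f (secf n1 f y) = y.
Proof.
move=> su yl; rewrite /secf; case: pickP => [x /eqP fx|none]; first by rewrite fx ltn_ord.
have [w wl fw] := su _ yl; have := none (Ordinal wl); by rewrite /= fw eqxx.
Qed.

Lemma tau0_emap f1 f2 (T1 T2 T3 : testgraph A) : tg_wf T1 ->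
  emap f1 T1 T2 -> emap f2 T1 T3 ->
  (forall x y, x < tg_n T1 -> y < tg_n T1 -> (f1 x == f1 y) = (f2 x == f2 y)) ->
  tau0 phi T2 = tau0 phi T3.
Proof.
move=> wf1 em1 em2 ker; rewrite !tau0_gen.
have castE f T (em : emap f T1 T) :
    gtau0 phi (tg_n T) (@esrc _ _ T) (@etgt _ _ T) (@elab _ _ T) =
    gtau0 phi (tg_n T) (fun i : edge_t T1 => f (esrc i)) (fun i => f (etgt i)) (@elab _ _ T1).
  case: em => eE _ _.
  have e : size (tg_e T1) = size (tg_e T) by rewrite eE size_map.
  symmetry; apply: (@gtau0_cast _ _ phi _ _ _ e) => i;
    by rewrite /esrc /etgt /elab /= eE (nth_map (0%N,0%N,0%R)).
rewrite (castE _ _ em1) (castE _ _ em2).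
case: em1 => _ l1 s1; case: em2 => _ l2 s2.
have wf := wf1; rewrite wfE in wf; move/forallP: wf => wf.
pose sg y := f2 (secf (tg_n T1) f1 y).
pose sg' z := f1 (secf (tg_n T1) f2 z).
have P1 y (yl : y < tg_n T2) := secfP s1 yl.
have P2 y (yl : y < tg_n T3) := secfP s2 yl.
have H1 y : y < tg_n T2 -> sg y < tg_n T3.
  by move=> yl; have [xl _] := P1 _ yl; apply: l2.
have H2 y : y < tg_n T3 -> sg' y < tg_n T2.
  by move=> yl; have [xl _] := P2 _ yl; apply: l1.
have H3 y : y < tg_n T2 -> sg' (sg y) = y.
  move=> yl; have [xl fx] := P1 _ yl.
  have [xl' fx'] := P2 _ (l2 _ xl).
  by apply/eqP; rewrite /sg' /sg -{2}fx ker // fx'.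
have H4 y : y < tg_n T3 -> sg (sg' y) = y.
  move=> yl; have [xl fx] := P2 _ yl.
  have [xl' fx'] := P1 _ (l1 _ xl).
  by apply/eqP; rewrite /sg' /sg -{2}fx -ker // fx'.
have H5 (i : edge_t T1) v : v < tg_n T2 -> (f2 (esrc i) == sg v) = (f1 (esrc i) == v).
  move=> vl; have [xl fx] := P1 _ vl; have /andP[il _] := wf i.
  by rewrite /sg -ker // fx.
have H6 (i : edge_t T1) v : v < tg_n T2 -> (f2 (etgt i) == sg v) = (f1 (etgt i) == v).
  move=> vl; have [xl fx] := P1 _ vl; have /andP[_ il] := wf i.
  by rewrite /sg -ker // fx.
symmetry; exact: (@gtau0_so _ _ phi _ _ _ _ _ _ _ _ sg sg' H1 H2 H3 H4 H5 H6).
Qed.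

Definition compat (T : testgraph A) (f : nat -> nat) (P : {set {set vert_t T}}) :=
  [forall x : vert_t T, forall y : vert_t T, (f x == f y) ==> (pblock P x == pblock P y)].

Lemma tau_surj f (T1 T2 : testgraph A) : tg_wf T1 -> emap f T1 T2 ->
  tau phi T2 = (\sum_(P : {set {set vert_t T1}} | partition P setT && compat f P)
                  tau0 phi (quot P))%R.
Proof.
move=> wf1 em; have [eE fl su] := em.
pose fo (x : vert_t T1) : vert_t T2 := Ordinal (fl _ (ltn_ord x)).
pose pull (Q : {set {set vert_t T2}}) :=
  preim_partition (fun x : vert_t T1 => pblock Q (fo x)) setT.
pose g (P : {set {set vert_t T1}}) (y : vert_t T2) :=
  if [pick x | fo x == y] is Some x then pblock P x else set0.
pose push (P : {set {set vert_t T1}}) := preim_partition (g P) setT.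
have pickE (y : vert_t T2) : exists x, [pick x | fo x == y] = Some x /\ fo x = y.
  case: pickP => [x /eqP hx|none]; first by exists x.
  have [x xl fx] := su _ (ltn_ord y).
  by have := none (Ordinal xl); rewrite (_ : fo _ = y) ?eqxx //; apply: val_inj.
have pullE Q x y : (pblock (pull Q) x == pblock (pull Q) y) = (pblock Q (fo x) == pblock Q (fo y)).
  exact: pblock_preim.
have pushE P y y' : (pblock (push P) y == pblock (push P) y') = (g P y == g P y').
  exact: pblock_preim.
have pushK Q : partition Q setT -> push (pull Q) = Q.
  move=> hQ; apply: part_eq => //; first exact: preim_partitionP.
  move=> y y'; rewrite pushE /g.
  have [x [-> <-]] := pickE y; have [x' [-> <-]] := pickE y'.
  by rewrite pullE.
have pullK P : partition P setT && compat f P -> pull (push P) = P.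
  case/andP => hP /forallP cP; apply: part_eq => //; first exact: preim_partitionP.
  have gE x : g P (fo x) = pblock P x.
    rewrite /g; have [x' [-> fx]] := pickE (fo x).
    apply/eqP; have /forallP/(_ x)/implyP := cP x'; apply.
    by move/(congr1 val): fx => /= ->.
  by move=> x y; rewrite pullE pushE !gE.
rewrite /tau [RHS](reindex_onto pull push pullK).
apply: eq_big => [Q|Q hQ].
  apply/idP/idP => [hQ|/andP[_ /eqP <-]]; last exact: preim_partitionP.
  rewrite preim_partitionP pushK ?eqxx ?andbT //.
  apply/forallP => x; apply/forallP => y; apply/implyP => /eqP fxy.
  by rewrite pullE (_ : fo x = fo y) //; apply: val_inj.
have hP : partition (pull Q) setT by exact: preim_partitionP.
apply: (tau0_emap wf1 (emap_comp em (emap_quot hQ)) (emap_quot hP)).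
move=> x y xl yl /=.
change ((blk Q (fo (Ordinal xl)) == blk Q (fo (Ordinal yl))) =
  (blk (pull Q) (Ordinal xl) == blk (pull Q) (Ordinal yl))).
by rewrite (blk_eq _ _ hQ) (blk_eq _ _ hP) pullE.
Qed.

End Emap.

Section Graph.
Variables (K : fieldType) (A : algType K) (T : testgraph A).
Implicit Types (S E : {set edge_t T}) (u v w x y : vert_t T) (i a : edge_t T) (p : seq (vert_t T)).

Definition joins (i : edge_t T) (u w : vert_t T) :=
  ((esrc i == u) && (etgt i == w)) || ((esrc i == w) && (etgt i == u)).
Definition touch (i : edge_t T) (v : vert_t T) := (esrc i == v) || (etgt i == v).
Definition tc (E : {set edge_t T}) v := #|[set i in E | touch i v]|.

Lemma adjSP S u w : reflect (exists2 i, i \in S & joins i u w) (adjS S u w).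
Proof.
apply: (iffP existsP) => [[i /andP[iS j]]|[i iS j]]; first by exists i.
by exists i; rewrite iS.
Qed.

Lemma joins_touch i u w v : joins i u w -> touch i v = (v == u) || (v == w).
Proof.
rewrite /touch; case/orP => /andP[/eqP -> /eqP ->]; rewrite !(eq_sym v) //; exact: orbC.
Qed.

Lemma joins_sym i u w : joins i u w = joins i w u.
Proof. by rewrite /joins orbC. Qed.

Lemma adjS_sym S : symmetric (adjS S).
Proof. by move=> u w; apply/adjSP/adjSP => [][i iS j]; exists i; rewrite // joins_sym. Qed.

Lemma adjS_mono S S' : S \subset S' -> subrel (adjS S) (adjS S').
Proof. by move=> sub u w /adjSP[i iS j]; apply/adjSP; exists i; first exact: (subsetP sub). Qed.

Lemma connect_mono S S' : S \subset S' -> subrel (connect (adjS S)) (connect (adjS S')).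
Proof. move=> sub; apply: connect_sub => u w /(adjS_mono sub); exact: connect1. Qed.

Lemma joins_noloop i u w : joins i u w -> u != w -> esrc i != etgt i.
Proof.
case/orP => /andP[/eqP -> /eqP ->] //; by rewrite eq_sym.
Qed.

Lemma tcU1 a E v : a \notin E -> tc (a |: E) v = touch a v + tc E v.
Proof.
move=> aE; rewrite /tc; case: (boolP (touch a v)) => ta.
  rewrite (_ : [set i in a |: E | touch i v] = a |: [set i in E | touch i v]).
    by rewrite cardsU1 inE (negPf aE).
  by apply/setP => i; rewrite !inE; case: (eqVneq i a) => [->|]; rewrite ?ta.
rewrite (_ : [set i in a |: E | touch i v] = [set i in E | touch i v]) //.
apply/setP => i; rewrite !inE; case: (eqVneq i a) => [->|] //=.
by rewrite (negPf ta) andbF.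
Qed.

Lemma tc0 v : tc set0 v = 0.
Proof. by apply/eqP; rewrite cards_eq0; apply/eqP/setP => i; rewrite !inE. Qed.

Lemma degE E v : {in E, forall i, esrc i != etgt i} -> indeg E v + outdeg E v = tc E v.
Proof.
move=> nl; rewrite /indeg /outdeg /tc -cardsUI.
rewrite (_ : _ :&: _ = set0) ?cards0 ?addn0.
  apply: eq_card => i; rewrite !inE /touch.
  by case: (i \in E); rewrite //= orbC.
apply/setP => i; rewrite !inE; case iE: (i \in E) => //=.
apply/negP => /andP[/eqP t /eqP s]; have := nl i iE; by rewrite s t eqxx.
Qed.

Lemma touchedE E v : touched E v = (0 < tc E v).
Proof.
apply/existsP/card_gt0P => [[i /andP[iE ti]]|[i]]; first by exists i; rewrite inE iE.
by rewrite inE => /andP[iE ti]; exists i; rewrite iE.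
Qed.

Definition pe S (x y : vert_t T) : {set edge_t T} :=
  if [pick i in S | joins i x y] is Some i then [set i] else set0.
Fixpoint pedges S x p := if p is y :: p' then pe S x y :|: pedges S y p' else set0.

Lemma pe_spec S x y : adjS S x y -> exists i, [/\ pe S x y = [set i], i \in S & joins i x y].
Proof.
move=> /adjSP [i0 i0S j0]; rewrite /pe; case: pickP => [i /andP[iS j]|none].
  by exists i.
by have := none i0; rewrite /= i0S j0.
Qed.

Lemma pedgesP S x p : uniq (x :: p) -> path (adjS S) x p ->
  [/\ pedges S x p \subset S,
      {in pedges S x p, forall i, esrc i != etgt i},
      forall v, tc (pedges S x p) v = 2 * (v \in x :: p) - (v == x) - (v == last x p) &
      forall v, v \in x :: p -> connect (adjS (pedges S x p)) x v].
Proof.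
elim: p x => [|y p IH] x /=.
  move=> _ _; split => //; first exact: sub0set.
  - by move=> i; rewrite inE.
  - by move=> v; rewrite tc0 inE; case: (v == x).
  by move=> v; rewrite inE => /eqP ->; apply: connect0.
case/andP; rewrite inE negb_or => /andP[xy xp] u /andP[a pa].
have [sub nl tcE con] := IH y u pa.
have [e [-> eS je]] := pe_spec a.
have xnin : x \notin y :: p by rewrite inE negb_or xy.
have tcx : tc (pedges S y p) x = 0.
  rewrite tcE (negPf xnin) (negPf xy).
  by case: (x == last y p).
have eE : e \notin pedges S y p.
  apply/negP => eP; move: tcx; rewrite /tc => /eqP; rewrite cards_eq0 => /eqP/setP/(_ e).
  by rewrite !inE eP (joins_touch _ je) eqxx.
split.
- by rewrite subUset sub1set eS sub.
- move=> i; rewrite !inE => /orP[/eqP ->|]; last exact: nl.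
  exact: (joins_noloop je).
- move=> v; rewrite tcU1 // (joins_touch _ je) tcE.
  have h1 : (v == x) -> (v \in y :: p) = false.
    by move=> /eqP ->; apply/negbTE.
  have h2 : (v == y) -> (v \in y :: p) by move=> /eqP ->; rewrite mem_head.
  have h3 : (v == last y p) -> (v \in y :: p) by move=> /eqP ->; rewrite mem_last.
  have h4 : (v == x) -> (v == y) = false by move=> /eqP ->; apply/negbTE.
  rewrite [v \in x :: _]in_cons.
  move: h1 h2 h3 h4; case: (v == x); case: (v == y); case: (v \in y :: p);
    case: (v == last y p) => //= h1 h2 h3 h4;
    first [ by have := h1 isT | by have := h2 isT | by have := h3 isT | by have := h4 isT ].
- move=> v; rewrite inE => /orP[/eqP ->|vp]; first exact: connect0.
  apply: (@connect_trans _ _ y).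
    apply: connect1; apply/adjSP; exists e => //; by rewrite !inE eqxx.
  by apply: (connect_mono (subsetUr _ _)); apply: con.
Qed.


Lemma cycle_from_path S x p e : uniq (x :: p) -> path (adjS S) x p -> p != [::] ->
  e \notin S -> joins e x (last x p) -> simple_cycle (e |: pedges S x p).
Proof.
move=> u pa pn eS je.
have [sub nl tcE con] := pedgesP u pa.
have xl : x != last x p.
  case: p u pa pn {sub nl tcE con je} => // y p /andP[xp _] _ _.
  by apply/eqP => xl; move: xp; rewrite xl /= mem_last.
have eE : e \notin pedges S x p by apply/negP => /(subsetP sub); apply/negP.
have nlC : {in e |: pedges S x p, forall i, esrc i != etgt i}.
  move=> i; rewrite !inE => /orP[/eqP ->|]; last exact: nl.
  exact: (joins_noloop je).
have tcC v : tc (e |: pedges S x p) v =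
    ((v == x) || (v == last x p)) + (2 * (v \in x :: p) - (v == x) - (v == last x p)).
  by rewrite tcU1 // (joins_touch _ je) tcE.
have inq v : touched (e |: pedges S x p) v -> v \in x :: p.
  rewrite touchedE tcC; apply: contraTT => vq.
  have h1 : (v == x) = false by apply: contraNF vq => /eqP ->; rewrite mem_head.
  have h2 : (v == last x p) = false by apply: contraNF vq => /eqP ->; rewrite mem_last.
  by rewrite h1 h2 (negPf vq).
apply/and3P; split.
- by apply/set0Pn; exists e; rewrite !inE eqxx.
- apply/forallP => v; apply/implyP => tv; rewrite degE // tcC (inq _ tv).
  move: xl; case: (eqVneq v x) => [->|vx] /=; first by move/negPf ->.
  by case: (v == last x p).
apply/forallP => v; apply/forallP => w; apply/implyP => /andP[tv tw].
have cv := connect_mono (subsetUr [set e] _) (con _ (inq _ tv)).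
have cw := connect_mono (subsetUr [set e] _) (con _ (inq _ tw)).
apply: connect_trans cw.
by rewrite (sym_connect_sym (@adjS_sym _)).
Qed.

Lemma cactus_sep : is_cactus T -> forall a b : vert_t T, a != b ->
  exists S : {set edge_t T}, #|S| <= 2 /\ ~~ connect (adjS (~:S)) a b.
Proof.
case/andP => /andP[_ /forallP conT] /forallP cyc a b ab.
have /connectP [p0 pa0 l0] := forallP (conT a) b.
case: (shortenP pa0) l0 => p pa up _ {p0 pa0} lb.
case: p pa up lb => [|v1 p] /=; first by move=> _ _ ba; rewrite ba eqxx in ab.
case/andP => a1 pa1 /andP[]; rewrite inE negb_or => /andP[av1 ap] up lb.
have [e1 _ je1] := adjSP _ _ _ a1.
have /cards1P [C CE] := cyc e1.
have : C \in [set S : {set edge_t T} | simple_cycle S & e1 \in S] by rewrite CE set11.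
rewrite inE => /andP[scC e1C].
have nl1 : esrc e1 != etgt e1 by apply: (joins_noloop je1).
have [g [gC ge1 tg]] : exists g, [/\ g \in C, g != e1 & touch g a].
  case: (pickP [pred g | [&& g \in C, g != e1 & touch g a]]) => [g /and3P[? ? ?]|none].
    by exists g.
  exfalso.
  have ta : touched C a.
    by apply/existsP; exists e1; rewrite e1C /= -/(touch e1 a) (joins_touch _ je1) eqxx.
  move: scC => /and3P[_ /forallP /(_ a) /implyP /(_ ta) /eqP deg _].
  move: deg; rewrite /indeg /outdeg -cardsUI.
  have sub : [set i in C | etgt i == a] :|: [set i in C | esrc i == a] \subset [set e1].
    apply/subsetP => i; rewrite !inE => H.
    apply/negPn/negP => ie1; have := none i; rewrite /= ie1 /touch.
    by case/orP: H => /andP[-> ->]; rewrite ?orbT.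
  have I0 : [set i in C | etgt i == a] :&: [set i in C | esrc i == a] = set0.
    apply/setP => i; rewrite !inE; apply/negP => /andP[/andP[iC /eqP ti] /andP[_ /eqP si]].
    have : i \in [set e1] by apply: (subsetP sub); rewrite !inE iC ti eqxx.
    by rewrite inE => /eqP ie; move: nl1; rewrite -ie si ti eqxx.
  rewrite I0 cards0 addn0 => H.
  by have := subset_leq_card sub; rewrite H cards1.
pose S := [set e1; g].
exists S; split; first by rewrite cards2; case: (e1 != g).
apply/negP => Hab.
have noS u w : u != a -> w != a -> adjS setT u w -> adjS (~: S) u w.
  move=> ua wa /adjSP [i _ ji]; apply/adjSP; exists i => //.
  rewrite !inE negb_or; apply/andP; split; apply/negP => /eqP ie.
    by move: ji; rewrite ie => /(joins_touch a); rewrite (joins_touch a je1) eqxx !(eq_sym a) (negPf ua) (negPf wa).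
  by move: ji; rewrite ie => /(joins_touch a); rewrite tg !(eq_sym a) (negPf ua) (negPf wa).
have pv : path (adjS (~: S)) v1 p.
  apply: (@sub_in_path _ (predC1 a)) pa1; last first.
    by rewrite /= eq_sym av1 /=; apply/allP => z zp /=; apply: contraNneq ap => <-.
  by move=> u w ua wa; apply: noS.
have cv1b : connect (adjS (~: S)) v1 b by apply/connectP; exists p.
have cav1 : connect (adjS (~: S)) a v1.
  apply: connect_trans Hab _; by rewrite (sym_connect_sym (@adjS_sym _)).
have /connectP [q0 qa0 ql0] := cav1.
case: (shortenP qa0) ql0 => q qa uq _ {q0 qa0} lq.
have qn : q != [::] by case: q qa uq lq => //= _ _ e; rewrite e eqxx in av1.
have e1S : e1 \notin ~: S by rewrite !inE eqxx.
have je' : joins e1 a (last a q) by rewrite -lq.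
have sc' := cycle_from_path uq qa qn e1S je'.
have : e1 |: pedges (~: S) a q \in [set S : {set edge_t T} | simple_cycle S & e1 \in S].
  by rewrite inE sc' !inE eqxx.
rewrite CE inE => /eqP CC.
have [sub _ _ _] := pedgesP uq qa.
move: gC; rewrite -CC !inE (negPf ge1) /= => /(subsetP sub).
by rewrite !inE eqxx orbT.
Qed.

End Graph.

Section R3.
Variables (K : fieldType) (A : algType K).

Definition r3 (T : testgraph A) (v w : vert_t T) :=
  [forall S : {set edge_t T}, (#|S| <= 2) ==> connect (adjS (~: S)) v w].

Lemma r3_equiv (T : testgraph A) : equivalence_rel (@r3 T).
Proof.
move=> x y z; split.
  by apply/forallP => S; apply/implyP => _; apply: connect0.
move=> /forallP rxy; apply/idP/idP => /forallP H; apply/forallP => S; apply/implyP => hS.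
  have cxy := implyP (rxy S) hS.
  have cyx : connect (adjS (~: S)) y x by rewrite (sym_connect_sym (@adjS_sym _ _ _ _)).
  exact: connect_trans cyx (implyP (H S) hS).
exact: connect_trans (implyP (rxy S) hS) (implyP (H S) hS).
Qed.

Lemma r3_sym (T : testgraph A) (v w : vert_t T) : r3 v w = r3 w v.
Proof.
apply/idP/idP => h.
  by have [rr e] := r3_equiv v w v; rewrite -(e h).
by have [rr e] := r3_equiv w v w; rewrite -(e h).
Qed.

Lemma cactus_r3 (T : testgraph A) (v w : vert_t T) : is_cactus T -> r3 v w -> v = w.
Proof.
move=> hc /forallP r; apply/eqP/negPn/negP => vw.
have [S [hS /negP nc]] := cactus_sep hc vw.
by apply: nc; apply: (implyP (r S)).
Qed.

Section Lift.
Variables (T T' : testgraph A) (f : nat -> nat) (phi : edge_t T -> edge_t T').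
Hypotheses (phi_inj : injective phi)
  (fl : forall x, x < tg_n T -> f x < tg_n T')
  (hs : forall i, esrc (phi i) = f (esrc i))
  (ht : forall i, etgt (phi i) = f (etgt i)).

Let ho (v : vert_t T) : vert_t T' := Ordinal (fl (ltn_ord v)).

Lemma connect_lift (S' : {set edge_t T'}) v w :
  connect (adjS (~: [set i | phi i \in S'])) v w -> connect (adjS (~: S')) (ho v) (ho w).
Proof.
move=> cvw; case/connectP: cvw => p pp wE; apply/connectP; exists (map ho p); last by rewrite wE last_map.
move: pp; apply: homo_path => x y /adjSP [i iS ji]; apply/adjSP; exists (phi i).
  by move: iS; rewrite !inE.
by rewrite /joins !hs !ht; case/orP: ji => /andP[/eqP -> /eqP ->]; rewrite !eqxx ?orbT.
Qed.

Lemma r3_lift (v w : vert_t T) (v' w' : vert_t T') : val v' = f v -> val w' = f w ->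
  r3 v w -> r3 v' w'.
Proof.
move=> ev ew /forallP r; apply/forallP => S'; apply/implyP => hS'.
have -> : v' = ho v by apply: val_inj.
have -> : w' = ho w by apply: val_inj.
apply: connect_lift; apply: (implyP (r _)).
apply: leq_trans hS'; rewrite -(card_imset _ phi_inj); apply: subset_leq_card.
by apply/subsetP => y /imsetP[i iS ->]; move: iS; rewrite inE.
Qed.

End Lift.

End R3.

Lemma bigmin_le (I : finType) (P : pred I) (F : I -> nat) x0 j : P j ->
  \big[minn/x0]_(i | P i) F i <= F j.
Proof.
move=> Pj; rewrite unlock; have : j \in index_enum I by rewrite mem_index_enum.
elim: (index_enum I) => [|a r IH] //=; rewrite inE => /orP[/eqP <-|jr].
  by rewrite Pj geq_minl.
case: (P a); last exact: IH jr.
exact: leq_trans (geq_minr (F a) _) (IH jr).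
Qed.

Section QC.
Variables (K : fieldType) (A : algType K) (T : testgraph A).
Hypotheses (wfT : tg_wf T) (conT : connected T).

Definition P0 := equivalence_partition (@r3 _ _ T) setT.

Lemma hP0 : partition P0 setT.
Proof. by apply: equivalence_partitionP => x y z _ _ _; apply: r3_equiv. Qed.

Lemma pbP0 x y : (pblock P0 x == pblock P0 y) = r3 x y.
Proof.
rewrite pblock_eqE; last exact: hP0.
by rewrite /P0 pblock_equivalence_partition ?inE // => a b c _ _ _; apply: r3_equiv.
Qed.

Lemma blkP0 (x y : vert_t T) : (blk P0 x == blk P0 y) = r3 x y.
Proof. by rewrite blk_eq ?pbP0 //; exact: hP0. Qed.

Let Q := quot P0.
Let eQ : size (tg_e T) = size (tg_e Q) := esym (size_map _ _).
Let ph (i : edge_t T) : edge_t Q := cast_ord eQ i.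
Let phK (j : edge_t Q) : ph (cast_ord (esym eQ) j) = j.
Proof. by apply: val_inj. Qed.
Let ph_inj : injective ph.
Proof. by move=> i j /(congr1 val) /= h; apply: val_inj. Qed.

Lemma hsQ (i : edge_t T) : esrc (ph i) = blk P0 (esrc i).
Proof. by rewrite /esrc /= (nth_map (0%N,0%N,0%R)). Qed.
Lemma htQ (i : edge_t T) : etgt (ph i) = blk P0 (etgt i).
Proof. by rewrite /etgt /= (nth_map (0%N,0%N,0%R)). Qed.

Let wfi (i : edge_t T) : (esrc i < tg_n T) && (etgt i < tg_n T).
Proof. by move: wfT; rewrite wfE => /forallP. Qed.

Lemma quot_qc : quasi_cactus (quot P0).
Proof.
apply/forallP => v'; apply/forallP => w'; apply/implyP => vw.
have [v ev] := blk_onto hP0 (ltn_ord v').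
have [w ew] := blk_onto hP0 (ltn_ord w').
have nr : ~~ r3 v w.
  by rewrite -blkP0 ev ew; apply: contra vw => /eqP h; apply/eqP/val_inj.
have [S /andP [hS nc]] : exists S : {set edge_t T}, (#|S| <= 2) && ~~ connect (adjS (~: S)) v w.
  by move/forallPn: nr => [S]; rewrite negb_imply => h; exists S.
pose S' := ph @: S.
pose C x := connect (adjS (~: S)) v x.
have Cbl (x y : vert_t T) : C x -> blk P0 x = blk P0 y -> C y.
  move=> cx /eqP; rewrite blkP0 => /forallP /(_ S) /implyP /(_ hS).
  exact: connect_trans.
have Cadj (x y : vert_t T) : C x -> adjS (~: S) x y -> C y.
  by move=> cx a; apply: connect_trans cx (connect1 a).
have edge (z y : vert_t Q) : adjS (~: S') z y -> exists (x0 y0 : vert_t T),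
    [/\ blk P0 x0 = z, blk P0 y0 = y & adjS (~: S) x0 y0].
  case/adjSP => j jS jj.
  pose i := cast_ord (esym eQ) j.
  have iS : i \in ~: S.
    rewrite inE; apply/negP => iS; move: jS; rewrite inE -(phK j) -/i.
    by rewrite (imset_f ph iS).
  have /andP[sl tl] := wfi i.
  pose x0 : vert_t T := Ordinal sl; pose y0 : vert_t T := Ordinal tl.
  move: jj; rewrite /joins -(phK j) hsQ htQ -/i.
  case/orP => /andP[/eqP e1 /eqP e2].
    exists x0, y0; split => //; apply/adjSP; exists i => //.
    by rewrite /joins !eqxx.
  exists y0, x0; split => //; apply/adjSP; exists i => //.
  by rewrite /joins !eqxx orbT.
have desc (p : seq (vert_t Q)) (z : vert_t Q) : path (adjS (~: S')) z p ->
    (forall x : vert_t T, blk P0 x = z -> C x) ->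
    forall x : vert_t T, blk P0 x = last z p -> C x.
  elim: p z => [|y p IH] z /=; first by move=> _ H.
  case/andP => a pa H; apply: IH => // x ex.
  have [x0 [y0 [e0 e1 a0]]] := edge _ _ a.
  by apply: Cbl (Cadj _ _ (H _ e0) a0) _; rewrite e1 ex.
have ncQ : ~~ connect (adjS (~: S')) v' w'.
  apply/negP => /connectP [p pp lp]; apply/negP: nc.
  rewrite negbK; apply: (desc p v' pp _ w); last by rewrite -lp ew.
  move=> x ex; apply: (Cbl v) (connect0 _ v) _; by rewrite ev ex.
have cQ : connect (adjS (~: set0)) v' w'.
  have fl x : x < tg_n T -> blk P0 x < tg_n Q by move=> xl; apply: blk_lt hP0 xl.
  have := connect_lift fl hsQ htQ (S' := set0) (v := v) (w := w).
  have -> : [set i | ph i \in set0] = set0 by apply/setP => i; rewrite !inE.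
  have -> : Ordinal (fl v (ltn_ord v)) = v' by apply: val_inj.
  have -> : Ordinal (fl w (ltn_ord w)) = w' by apply: val_inj.
  by apply; move/forallP: conT => /(_ v) /forallP /(_ w); rewrite setC0.
have up : edge_conn v' w' <= 2.
  rewrite /edge_conn; apply: (leq_trans (bigmin_le _ _ (j := S') _)); first exact: ncQ.
  by rewrite card_imset.
have lo : 0 < edge_conn v' w'.
  rewrite /edge_conn; apply: (big_ind (fun k => 0 < k)) => //.
    by move=> a b a0 b0; rewrite leq_min a0 b0.
  move=> S0 nc0; rewrite card_gt0; apply: contra nc0 => /eqP ->; exact: cQ.
move: up lo; case: (edge_conn v' w') => [|[|[|k]]] //.
Qed.

End QC.

Section Main.
Variables (K : fieldType) (A : algType K) (phi : A -> K).

Lemma glue_ker (T : testgraph A) a b x y : x < tg_n T -> y < tg_n T ->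
  (blk (glue_part T a b) x == blk (glue_part T a b) y) =
  ((if x == b then a else x) == (if y == b then a else y)).
Proof.
move=> xl yl.
rewrite -[x]/(nat_of_ord (Ordinal xl)) -[y]/(nat_of_ord (Ordinal yl)) blk_eq.
  by rewrite pblock_preim.
exact: preim_partitionP.
Qed.

Lemma glue_cases (T : testgraph A) a b z z' : z < tg_n T -> z' < tg_n T ->
  blk (glue_part T a b) z = blk (glue_part T a b) z' ->
  z = z' \/ (z = a /\ z' = b) \/ (z = b /\ z' = a).
Proof.
move=> zl zl' /eqP; rewrite glue_ker //.
case: (eqVneq z b) => [->|zb]; case: (eqVneq z' b) => [->|zb'] /eqP //; auto.
Qed.

Lemma glued (T : testgraph A) a b : a < tg_n T -> b < tg_n T ->
  blk (glue_part T a b) a = blk (glue_part T a b) b.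
Proof.
move=> al bl; apply/eqP; rewrite glue_ker // eqxx.
by case: (eqVneq a b).
Qed.

Lemma ker_step (R : nat -> nat -> Prop) N M (f g : nat -> nat) a b a' b' :
  (forall x y z, x < N -> y < N -> z < N -> R x y -> R y z -> R x z) ->
  (forall x y, x < N -> y < N -> R x y -> R y x) ->
  (forall x y, x < N -> y < N -> f x = f y -> R x y) ->
  (forall x, x < N -> f x < M) ->
  (forall z z', z < M -> z' < M -> g z = g z' ->
     z = z' \/ (z = a' /\ z' = b') \/ (z = b' /\ z' = a')) ->
  f a = a' -> f b = b' -> a < N -> b < N -> R a b ->
  forall x y, x < N -> y < N -> g (f x) = g (f y) -> R x y.
Proof.
move=> tr sy base fl gc fa fb al bl rab x y xl yl /(gc _ _ (fl _ xl) (fl _ yl)).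
case=> [/base|[[e1 e2]|[e1 e2]]]; first by apply.
  apply: (tr _ a) => //; first by apply: base => //; rewrite e1.
  by apply: (tr _ b) => //; apply: base => //; rewrite fb.
apply: (tr _ b) => //; first by apply: base => //; rewrite e1.
apply: (tr _ a) => //; first by apply: sy.
by apply: base => //; rewrite fa.
Qed.

Lemma compatP (T : testgraph A) (f : nat -> nat) (P : {set {set vert_t T}}) :
  partition P setT ->
  compat f P <-> (forall x y, x < tg_n T -> y < tg_n T -> f x = f y -> blk P x = blk P y).
Proof.
move=> hP; split.
  move=> /forallP c x y xl yl fxy.
  have := implyP (forallP (c (Ordinal xl)) (Ordinal yl)); rewrite /= fxy eqxx => /(_ isT).
  by rewrite -(blk_eq _ _ hP) => /eqP.
move=> H; apply/forallP => x; apply/forallP => y; apply/implyP => /eqP fxy.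
by rewrite -(blk_eq _ _ hP) (H _ _ (ltn_ord x) (ltn_ord y) fxy).
Qed.

(* the disjoint union graph and the gluing partitions of gm_mul / delta *)
Definition Dg (t u : gmono A) : testgraph A :=
  TG (tg_n (gm_g t) + tg_n (gm_g u))
     (tg_e (gm_g t) ++ [seq (tg_n (gm_g t) + e.1.1, tg_n (gm_g t) + e.1.2, e.2)%N
                       | e <- tg_e (gm_g u)]).
Definition P1 (t u : gmono A) := glue_part (Dg t u) (gm_in t) (tg_n (gm_g t) + gm_out u).
Definition P2 (t u : gmono A) :=
  glue_part (quot (P1 t u)) (blk (P1 t u) (tg_n (gm_g t) + gm_in u)) (blk (P1 t u) (gm_out t)).
Definition hm (t u : gmono A) := blk (P2 t u) \o blk (P1 t u).

Lemma delta_mul t u : delta (gm_mul t u) = quot (P2 t u).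
Proof. by []. Qed.

Lemma emap_hm t u : emap (hm t u) (Dg t u) (delta (gm_mul t u)).
Proof.
rewrite delta_mul; apply: emap_comp; apply: emap_quot; exact: preim_partitionP.
Qed.

Lemma wf_Dg t u : gm_wf t -> gm_wf u -> tg_wf (Dg t u).
Proof.
case/and4P => wt _ _ _ /and4P [wu _ _ _]; rewrite /tg_wf /= all_cat.
apply/andP; split.
  apply/allP => e /(allP wt) /andP[l1 l2].
  by rewrite !(leq_trans _ (leq_addr _ _)).
by apply/allP => _ /mapP [e /(allP wu) /andP[l1 l2] ->] /=; rewrite !ltn_add2l l1 l2.
Qed.

End Main.

Section Final.
Variables (K : fieldType) (A : algType K) (phi : A -> K).

Lemma main_gen (t : gmono A) : gm_wf t ->
  exists P : {set {set vert_t (gm_g t)}},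
    [/\ partition P [set: vert_t (gm_g t)],
        quasi_cactus (gm_g (gm_quot t P))
      & eq_mod_psi phi (gm_quot t P) t].
Proof.
move=> ht; have /and4P [wft itl otl cont] := ht.
exists (P0 (gm_g t)); split; [exact: hP0 | exact: quot_qc | ].
move=> u hu; have /and4P [wfu iul oul _] := hu.
set Tt := gm_g t in wft itl otl cont *.
set P0t := P0 Tt.
have hP0t : partition P0t setT := hP0 Tt.
set t' := gm_quot t P0t.
set n1 := tg_n Tt; set n2 := tg_n (gm_g u); set p0 := #|P0t|.
set it := gm_in t; set ot := gm_out t; set iu := gm_in u; set ou := gm_out u.
pose k x := if x < n1 then blk P0t x else p0 + (x - n1).
have kL x : x < n1 -> k x = blk P0t x by rewrite /k => ->.
have kR x : k (n1 + x) = p0 + x by rewrite /k ltnNge leq_addr /= addKn.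
have kl x : x < n1 + n2 -> k x < p0 + n2.
  rewrite /k; case: ifP => [xl _|xl xl'].
    by apply: leq_trans (blk_lt hP0t xl) (leq_addr _ _).
  by rewrite ltn_add2l ltn_subLR // leqNgt xl.
have kemap : emap k (Dg t u) (Dg t' u).
  split => //.
  - rewrite /= map_cat; congr (_ ++ _).
      apply/eq_in_map => e /(allP wft) /andP[l1 l2] /=.
      by rewrite (kL _ l1) (kL _ l2).
    by rewrite -map_comp; apply: eq_map => e /=; rewrite !kR.
  move=> y /= yl; case: (ltnP y p0) => yp.
    have [v <-] := blk_onto hP0t yp; exists (nat_of_ord v).
      by apply: leq_trans (ltn_ord v) (leq_addr _ _).
    exact: kL.
  exists (n1 + (y - p0)); first by rewrite ltn_add2l ltn_subLR.
  by rewrite kR subnKC.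
have wfD := wf_Dg ht hu.
rewrite /psi (tau_surj phi wfD (emap_hm t u)).
rewrite (tau_surj phi wfD (emap_comp kemap (emap_hm t' u))).
set h1 := hm t u; set h2 := hm t' u \o k.
set N := n1 + n2.
have hP1 : partition (P1 t u) setT by exact: preim_partitionP.
have hP2 : partition (P2 t u) setT by exact: preim_partitionP.
have hP1' : partition (P1 t' u) setT by exact: preim_partitionP.
have hP2' : partition (P2 t' u) setT by exact: preim_partitionP.
have itN : it < N by apply: leq_trans itl (leq_addr _ _).
have otN : ot < N by apply: leq_trans otl (leq_addr _ _).
have iuN : n1 + iu < N by rewrite ltn_add2l.
have ouN : n1 + ou < N by rewrite ltn_add2l.
have g1 : h1 it = h1 (n1 + ou).
  by rewrite /h1 /hm /= (glued (T := Dg t u) itN ouN).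
have g2 : h1 (n1 + iu) = h1 ot.
  have L1 : blk (P1 t u) (n1 + iu) < tg_n (quot (P1 t u)) by exact: blk_lt.
  have L2 : blk (P1 t u) ot < tg_n (quot (P1 t u)) by exact: blk_lt.
  exact: (glued L1 L2).
have L1 : blk P0t it < tg_n (Dg t' u).
  by apply: leq_trans (blk_lt hP0t itl) (leq_addr _ _).
have L2 : p0 + ou < tg_n (Dg t' u) by rewrite /= ltn_add2l.
have g1' : h2 it = h2 (n1 + ou).
  rewrite /h2 /hm /= kR kL //; congr (blk _ _); exact: (glued L1 L2).
have L3 : blk (P1 t' u) (p0 + iu) < tg_n (quot (P1 t' u)).
  by apply: blk_lt => //; rewrite /= ltn_add2l.
have L4 : blk (P1 t' u) (blk P0t ot) < tg_n (quot (P1 t' u)).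
  by apply: blk_lt => //; apply: leq_trans (blk_lt hP0t otl) (leq_addr _ _).
have g2' : h2 (n1 + iu) = h2 ot.
  rewrite /h2 /hm /= kR kL //; exact: (glued L3 L4).
have TRA x y z : x < N -> y < N -> z < N -> h2 x = h2 y -> h2 y = h2 z -> h2 x = h2 z.
  by move=> _ _ _ ->.
have SYA x y : x < N -> y < N -> h2 x = h2 y -> h2 y = h2 x by move=> _ _ ->.
have GC1 z z' : z < N -> z' < N -> blk (P1 t u) z = blk (P1 t u) z' ->
    z = z' \/ (z = it /\ z' = n1 + ou) \/ (z = n1 + ou /\ z' = it).
  exact: (glue_cases (T := Dg t u)).
have GC2 z z' : z < tg_n (quot (P1 t u)) -> z' < tg_n (quot (P1 t u)) ->
    blk (P2 t u) z = blk (P2 t u) z' ->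
    z = z' \/ (z = blk (P1 t u) (n1 + iu) /\ z' = blk (P1 t u) ot) \/
    (z = blk (P1 t u) ot /\ z' = blk (P1 t u) (n1 + iu)).
  exact: (glue_cases (T := quot (P1 t u))).
have kerA0 x y : x < N -> y < N -> blk (P1 t u) x = blk (P1 t u) y -> h2 x = h2 y.
  move=> xl yl e.
  have B0 x0 y0 : x0 < N -> y0 < N -> id x0 = id y0 -> h2 x0 = h2 y0 by move=> _ _ ->.
  have FL0 x0 : x0 < N -> id x0 < N by [].
  exact: (@ker_step (fun x y => h2 x = h2 y) N N id (blk (P1 t u)) it (n1 + ou) it (n1 + ou)
            TRA SYA B0 FL0 GC1 erefl erefl itN ouN g1' x y xl yl e).
have kerA x y : x < N -> y < N -> h1 x = h1 y -> h2 x = h2 y.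
  move=> xl yl e.
  have FL1 x0 : x0 < N -> blk (P1 t u) x0 < tg_n (quot (P1 t u)) by move=> x0l; apply: blk_lt.
  exact: (@ker_step (fun x y => h2 x = h2 y) N (tg_n (quot (P1 t u)))
            (blk (P1 t u)) (blk (P2 t u)) (n1 + iu) ot _ _
            TRA SYA kerA0 FL1 GC2 erefl erefl iuN otN g2' x y xl yl e).
have kerB (P : {set {set vert_t (Dg t u)}}) : partition P setT -> compat h1 P ->
    tau0 phi (quot P) != 0%R -> compat h2 P.
  move=> hP /(compatP _ hP) c1 nz; apply/(compatP _ hP).
  have cact : is_cactus (quot P).
    by move: nz; rewrite /tau0; case: ifP => [/andP[]|] //; rewrite eqxx.
  have base x y : x < N -> y < N -> k x = k y -> blk P x = blk P y.
    move=> xl yl; rewrite /k; case: ifP => xn1; case: ifP => yn1.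
    + move=> /eqP.
      rewrite -[x]/(nat_of_ord (Ordinal xn1)) -[y]/(nat_of_ord (Ordinal yn1)).
      rewrite blkP0 => r.
      have fl z : z < tg_n Tt -> blk P z < tg_n (quot P).
        by move=> zl; apply: blk_lt hP (leq_trans zl (leq_addr _ _)).
      have le : size (tg_e Tt) <= size (tg_e (quot P)).
        by rewrite /= size_map size_cat leq_addr.
      pose ph (i : edge_t Tt) : edge_t (quot P) := widen_ord le i.
      have ph_inj : injective ph by move=> i j /(congr1 val) /= e; apply: val_inj.
      have hs i : esrc (ph i) = blk P (esrc i).
        by rewrite /esrc /= (nth_map (0%N,0%N,0%R)) ?nth_cat ?ltn_ord // size_cat;
          apply: leq_trans (ltn_ord i) (leq_addr _ _).
      have htt i : etgt (ph i) = blk P (etgt i).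
        by rewrite /etgt /= (nth_map (0%N,0%N,0%R)) ?nth_cat ?ltn_ord // size_cat;
          apply: leq_trans (ltn_ord i) (leq_addr _ _).
      have := r3_lift ph_inj fl hs htt (v := Ordinal xn1) (w := Ordinal yn1) (v' := Ordinal (fl _ xn1)) (w' := Ordinal (fl _ yn1))
                erefl erefl r.
      by move=> /(cactus_r3 cact) /(congr1 val).
    + by move=> e; have := blk_lt hP0t xn1; rewrite e ltnNge leq_addr.
    + by move=> e; have := blk_lt hP0t yn1; rewrite -e ltnNge leq_addr.
    move=> /eqP; rewrite eqn_add2l => /eqP e; congr (blk P _).
    have hx : n1 <= x by rewrite leqNgt xn1.
    have hy : n1 <= y by rewrite leqNgt yn1.
    by rewrite -(subnKC hx) -(subnKC hy) e.
  have TRB x y z : x < N -> y < N -> z < N -> blk P x = blk P y -> blk P y = blk P z ->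
      blk P x = blk P z by move=> _ _ _ ->.
  have SYB x y : x < N -> y < N -> blk P x = blk P y -> blk P y = blk P x by move=> _ _ ->.
  have GC1' z z' : z < p0 + n2 -> z' < p0 + n2 -> blk (P1 t' u) z = blk (P1 t' u) z' ->
      z = z' \/ (z = blk P0t it /\ z' = p0 + ou) \/ (z = p0 + ou /\ z' = blk P0t it).
    exact: (glue_cases (T := Dg t' u)).
  have GC2' z z' : z < tg_n (quot (P1 t' u)) -> z' < tg_n (quot (P1 t' u)) ->
      blk (P2 t' u) z = blk (P2 t' u) z' ->
      z = z' \/ (z = blk (P1 t' u) (p0 + iu) /\ z' = blk (P1 t' u) (blk P0t ot)) \/
      (z = blk (P1 t' u) (blk P0t ot) /\ z' = blk (P1 t' u) (p0 + iu)).
    exact: (glue_cases (T := quot (P1 t' u))).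
  have R1 : blk P it = blk P (n1 + ou) by apply: c1.
  have R2 : blk P (n1 + iu) = blk P ot by apply: c1.
  have kB0 x y : x < N -> y < N -> blk (P1 t' u) (k x) = blk (P1 t' u) (k y) ->
      blk P x = blk P y.
    move=> xl yl e.
    exact: (@ker_step (fun x y => blk P x = blk P y) N (p0 + n2) k (blk (P1 t' u))
              it (n1 + ou) (blk P0t it) (p0 + ou)
              TRB SYB base kl GC1' (kL it itl) (kR ou) itN ouN R1 x y xl yl e).
  have FL x : x < N -> (blk (P1 t' u) \o k) x < tg_n (quot (P1 t' u)).
    by move=> xl; apply: blk_lt => //; apply: kl.
  have fa : (blk (P1 t' u) \o k) (n1 + iu) = blk (P1 t' u) (p0 + iu) by rewrite /= kR.
  have fb : (blk (P1 t' u) \o k) ot = blk (P1 t' u) (blk P0t ot) by rewrite /= kL.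
  move=> x y xl yl e.
  exact: (@ker_step (fun x y => blk P x = blk P y) N (tg_n (quot (P1 t' u)))
            (blk (P1 t' u) \o k) (blk (P2 t' u)) (n1 + iu) ot _ _
            TRB SYB kB0 FL GC2' fa fb iuN otN R2 x y xl yl e).
rewrite [RHS](bigID (fun P => compat h2 P)) /=.
rewrite [X in _ = (_ + X)%R]big1 ?GRing.addr0.
  apply: eq_bigl => P; case hP: (partition P setT) => //=.
  apply/idP/idP => [c2|/andP[]//]; rewrite c2 andbT.
  move: c2 => /(compatP (T := Dg t u) h2 hP) c2; apply/(compatP (T := Dg t u) h1 hP) => x y xl yl e.
  by apply: c2 => //; apply: kerA.
move=> P /andP[/andP[hP c1] nc2]; apply/eqP/negPn/negP => nz.
by rewrite (kerB P hP c1 nz) in nc2.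
Qed.

End Final.


Unset Implicit Arguments. Set Strict Implicit. Set Printing Implicit Defensive.
Import GRing.Theory.
Local Open Scope ring_scope.

Theorem corollary2p9 (A : algType complexC) (phi : A -> complexC)
  (phi_lin : forall (c : complexC) (x y : A), phi (c *: x + y) = c * phi x + phi y)
  (phi_unit : phi 1 = 1)
  (phi_trace : forall x y : A, phi (x * y) = phi (y * x))
  (t : gmono A) (ht : gm_wf t) :
  exists P : {set {set vert_t (gm_g t)}},
    [/\ partition P [set: vert_t (gm_g t)],
        quasi_cactus (gm_g (gm_quot t P))
      & eq_mod_psi phi (gm_quot t P) t].
Proof. exact: main_gen. Qed.
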